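(* For every $n\ge1$, $M_n$ is not a finitely generated $M_0$-module. Moreover, letting $B=K[x,y/x]_{(x,y/x)}$ (a regular local ring birationally dominating $A$) and $M_\infty=\bar\nu(B\setminus\{0\})$, the set $M_\infty$ is not a finitely generated $M_0$-module.
   Context: $K$ is an algebraically closed field, $A=K[x,y]_{(x,y)}$. Set $\bar\beta_0=1$, $\bar\beta_{i+1}=2\bar\beta_i+2^{-(i+1)}$. Let $P_0=x$, $P_1=y$, $P_{i+1}=P_i^2-P_0^{2^{i+1}}P_{i-1}$ ($i\ge1$). Let $\bar\nu$ be the valuation of $K(x,y)$ dominating $A$ for which $P_0,P_1,\dots$ is a (minimal) generating sequence with $\bar\nu(P_i)=\bar\beta_i$; its value group is $\bigcup_{i\ge0}2^{-i}\mathbb Z$ and $M_0=\bar\nu(A\setminus\{0\})=\sum_{i\ge0}\mathbb N\bar\beta_i$. Let $z=y/x$, $W_n=\{a_0+a_1z+\cdots+a_nz^n\mid a_j\in K[x,y]\}$ and $M_n=\{\bar\nu(f)\mid 0\ne f\in W_n\}$. A subset $F$ with $M_0+F\subseteq F$ is a finitely generated $M_0$-module if $F=\bigcup_{i=1}^k(M_0+m_i)$ for some $m_1,\dots,m_k\in F$. *)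

(* Defs.v *)
From HB Require Import structures.
From mathcomp Require Import all_boot all_order all_algebra.
Set Implicit Arguments. Unset Strict Implicit. Unset Printing Implicit Defensive.
Import Order.TTheory GRing.Theory Num.Theory.
Local Open Scope ring_scope.

(* K[x,y] is modelled as {poly {poly K}}: outer variable y, inner variable x. *)
Section Defs.
Variable K : closedFieldType.
Local Notation Pxy := {poly {poly K}}.

Definition varx : Pxy := ('X)%:P.
Definition vary : Pxy := 'X.

Definition at0 (f : Pxy) : K := (f.[0]).[0].

Fixpoint beta (i : nat) : rat :=
  match i with
  | 0 => 1
  | i'.+1 => 2 * beta i' + ((2 : rat) ^+ i'.+1)^-1
  end.

(* (P_i, P_(i+1)); P_0 = x, P_1 = y, P_(i+1) = P_i^2 - x^(2^(i+1)) P_(i-1) *)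
Fixpoint Ppair (i : nat) : Pxy * Pxy :=
  match i with
  | 0 => (varx, vary)
  | i'.+1 => let: (p, q) := Ppair i' in
             (q, q ^+ 2 - varx ^+ (2 ^ i'.+2)%N * p)
  end.
Definition P (i : nat) : Pxy := (Ppair i).1.

Definition Pmono (a : seq nat) : Pxy := \prod_(i < size a) P i ^+ (nth 0%N a i).
Definition Pmono_val (a : seq nat) : rat :=
  \sum_(i < size a) (nth 0%N a i)%:R * beta i.

(* nu : K[x,y] \ {0} -> Q, determining a valuation of K(x,y) (value on 0 irrelevant) *)
Definition is_valuation (nu : Pxy -> rat) : Prop :=
  (forall f g, f != 0 -> g != 0 -> nu (f * g) = nu f + nu g) /\
  (forall f g, f != 0 -> g != 0 -> f + g != 0 -> Num.min (nu f) (nu g) <= nu (f + g)).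

(* nu dominates A = K[x,y]_(x,y): nu >= 0 on A, nu > 0 on its maximal ideal.
   Elements of A are f/h with h(0,0) <> 0; nu(f/h) = nu f - nu h. *)
Definition dominates_A (nu : Pxy -> rat) : Prop :=
  forall f h, f != 0 -> h != 0 -> at0 h != 0 ->
    0 <= nu f - nu h /\ (at0 f = 0 -> 0 < nu f - nu h).

(* P_0, P_1, ... is a generating sequence: for every gamma the ideal
   {f in A | nu f >= gamma} is generated by the monomials in the P_i of value
   >= gamma. Equivalently: every nonzero f in K[x,y] lies, in A, in the ideal
   generated by the monomials of value >= nu f. *)
Definition generating_seq (nu : Pxy -> rat) : Prop :=
  (forall i, nu (P i) = beta i) /\
  forall f, f != 0 -> exists h : Pxy, at0 h != 0 /\
    exists s : seq (Pxy * seq nat),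
      h * f = \sum_(c <- s) c.1 * Pmono c.2 /\
      forall c, c \in s -> nu f <= Pmono_val c.2.

Definition is_nubar (nu : Pxy -> rat) : Prop :=
  is_valuation nu /\ dominates_A nu /\ generating_seq nu.

Definition M0 (nu : Pxy -> rat) (m : rat) : Prop :=
  exists f h : Pxy, f != 0 /\ h != 0 /\ at0 h != 0 /\ m = nu f - nu h.

(* M_n = nu(W_n \ {0}), W_n = {a_0 + a_1 z + ... + a_n z^n}, z = y/x;
   x^n (sum a_j z^j) = sum a_j y^j x^(n-j), so nu(sum a_j z^j) = nu(that) - n nu(x). *)
Definition Wn_num (n : nat) (a : nat -> Pxy) : Pxy :=
  \sum_(j < n.+1) a j * vary ^+ j * varx ^+ (n - j).
Definition Mn (nu : Pxy -> rat) (n : nat) (m : rat) : Prop :=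
  exists a : nat -> Pxy, Wn_num n a != 0 /\ m = nu (Wn_num n a) - n%:R * nu varx.

(* K[x,z] also modelled as {poly {poly K}} (outer variable z, inner x).
   For G in K[x,z] with N = size G, x^N G(x, y/x) = sum_j G_j(x) y^j x^(N-j). *)
Definition xz_num (G : Pxy) : Pxy :=
  \sum_(j < size G) (G`_j)%:P * vary ^+ j * varx ^+ (size G - j).
Definition nu_xz (nu : Pxy -> rat) (G : Pxy) : rat :=
  nu (xz_num G) - (size G)%:R * nu varx.

(* M_infty = nu(B \ {0}), B = K[x,z]_(x,z): elements G/H with H(0,0) <> 0 *)
Definition Minf (nu : Pxy -> rat) (m : rat) : Prop :=
  exists G H : Pxy, G != 0 /\ H != 0 /\ at0 H != 0 /\ m = nu_xz nu G - nu_xz nu H.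

End Defs.

Definition fg_module (M0 F : rat -> Prop) : Prop :=
  exists ms : seq rat, (forall m, m \in ms -> F m) /\
    forall u, F u <-> exists2 m, m \in ms & exists2 a, M0 a & u = (a + m)%R.

(* Main.v *)
Require Import Defs.
From HB Require Import structures.
From mathcomp Require Import all_boot all_order all_algebra.
Set Implicit Arguments. Unset Strict Implicit. Unset Printing Implicit Defensive.
Import Order.TTheory GRing.Theory Num.Theory.
Local Open Scope ring_scope.



Section Poly.
Variable K : closedFieldType.
Local Notation Pxy := {poly {poly K}}.

Lemma P_succ (i : nat) : P K i.+1 = (Ppair K i).2.
Proof. by rewrite /P /=; case: (Ppair K i). Qed.

Lemma Ppair_succ2 (i : nat) : (Ppair K i.+1).2 =
  (Ppair K i).2 ^+ 2 - varx K ^+ (2 ^ i.+2)%N * (Ppair K i).1.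
Proof. by rewrite /=; case: (Ppair K i). Qed.

Lemma Ppair_succ1 (i : nat) : (Ppair K i.+1).1 = (Ppair K i).2.
Proof. by rewrite /=; case: (Ppair K i). Qed.

Lemma varx_neq0 : varx K != 0.
Proof. by rewrite /varx polyC_eq0 polyX_eq0. Qed.

Lemma size_varx : size (varx K) = 1%N.
Proof. by rewrite /varx size_polyC polyX_eq0. Qed.

Lemma Ppair_inv (i : nat) :
  [/\ (Ppair K i).1 != 0, (Ppair K i).2 \is monic &
      (size (Ppair K i).1 < size (Ppair K i).2)%N].
Proof.
elim: i => [|i [H1 H2 H3]].
  split => /=; first exact: varx_neq0.
    by rewrite /vary monicX.
  by rewrite size_varx /vary size_polyX.
rewrite Ppair_succ1 Ppair_succ2.
set p := (Ppair K i).1; set q := (Ppair K i).2.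
have q0 : q != 0 by apply: monic_neq0.
have sp : (0 < size p)%N by rewrite size_poly_gt0.
have sq2 : (size q < size (q ^+ 2))%N.
  rewrite expr2 size_monicM // -subn1 -addnBA ?size_poly_gt0 //.
  by rewrite -{1}[size q]addn0 ltn_add2l subn_gt0 (leq_ltn_trans _ H3).
have sxp : size (varx K ^+ (2 ^ i.+2)%N * p) = size p.
  by rewrite /varx -rmorphXn size_Cmul // expf_neq0 // polyX_eq0.
have sl : (size (- (varx K ^+ (2 ^ i.+2)%N * p)) < size (q ^+ 2))%N.
  by rewrite size_opp sxp (ltn_trans H3).
split => //.
  by rewrite monicE lead_coefDl // -monicE monic_exp.
by rewrite size_polyDl.
Qed.

Lemma P_neq0 (i : nat) : P K i != 0.
Proof. by case: (Ppair_inv i). Qed.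

Lemma P_decomp (i : nat) : exists A B : Pxy, P K i.+1 = varx K * A + vary K * B.
Proof.
rewrite P_succ; elim: i => [|i [A [B HAB]]].
  by exists 0, 1; rewrite /= mulr0 add0r mulr1.
rewrite Ppair_succ2 HAB expr2.
have -> : (2 ^ i.+2 = (2 ^ i.+2).-1.+1)%N by rewrite prednK // expn_gt0.
rewrite exprS.
exists ((varx K * A + vary K * B) * A - varx K ^+ (2 ^ i.+2).-1 * (Ppair K i).1).
exists ((varx K * A + vary K * B) * B).
rewrite {1}[(_ + _) * (_ + _)]mulrDr mulrBr !mulrA.
rewrite [_ * varx K]mulrC [_ * vary K]mulrC.
by rewrite addrAC.
Qed.

End Poly.



Section Nu.
Variable K : closedFieldType.
Local Notation Pxy := {poly {poly K}}.
Variable nu : Pxy -> rat.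
Hypothesis Hv : is_valuation nu.
Hypothesis Hd : dominates_A nu.
Hypothesis Hg : generating_seq nu.

Lemma nuM (f g : Pxy) : f != 0 -> g != 0 -> nu (f * g) = nu f + nu g.
Proof. by case: Hv => H _; apply: H. Qed.

Lemma nuD (f g : Pxy) : f != 0 -> g != 0 -> f + g != 0 ->
  Num.min (nu f) (nu g) <= nu (f + g).
Proof. by case: Hv => _ H; apply: H. Qed.

Lemma nu1 : nu 1 = 0.
Proof.
have := nuM (oner_neq0 Pxy) (oner_neq0 Pxy); rewrite mulr1 -{1}[nu 1]addr0.
by move/addrI => <-.
Qed.

Lemma at0_1 : at0 (1 : Pxy) = 1.
Proof. by rewrite /at0 hornerC hornerC. Qed.

Lemma at0M (f g : Pxy) : at0 (f * g) = at0 f * at0 g.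
Proof. by rewrite /at0 !hornerM. Qed.

Lemma nu_ge0 (f : Pxy) : f != 0 -> 0 <= nu f.
Proof.
move=> f0; have [] := Hd f0 (oner_neq0 Pxy); first by rewrite at0_1 oner_neq0.
by rewrite nu1 subr0.
Qed.

Lemma nu_unit (h : Pxy) : at0 h != 0 -> nu h = 0.
Proof.
move=> h0; have hn0 : h != 0 by apply: contra h0 => /eqP ->; rewrite /at0 !horner0.
have [] := Hd (oner_neq0 Pxy) hn0 h0; rewrite nu1 sub0r oppr_ge0 => H _.
by apply/eqP; rewrite eq_le H nu_ge0.
Qed.

Lemma nuX (f : Pxy) (k : nat) : f != 0 -> nu (f ^+ k) = k%:R * nu f.
Proof.
move=> f0; elim: k => [|k IH]; first by rewrite expr0 nu1 mul0r.
by rewrite exprS nuM ?expf_neq0 // IH mulrSr mulrDl mul1r addrC.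
Qed.

Lemma nuN (f : Pxy) : f != 0 -> nu (- f) = nu f.
Proof.
move=> f0; have m10 : (-1 : Pxy) != 0 by rewrite oppr_eq0 oner_neq0.
have : nu (-1 * -1) = nu (-1) + nu (-1) by rewrite nuM.
rewrite mulrNN mulr1 nu1 => /eqP; rewrite eq_sym -mulr2n -mulr_natr mulf_eq0 /=.
rewrite pnatr_eq0 orbF => /eqP H.
by rewrite -mulN1r nuM // H add0r.
Qed.

Lemma nu_prod (I : Type) (r : seq I) (F : I -> Pxy) :
  (forall i, F i != 0) ->
  \prod_(i <- r) F i != 0 /\ nu (\prod_(i <- r) F i) = \sum_(i <- r) nu (F i).
Proof.
move=> HF.
apply: (big_ind2 (fun p q => p != 0 /\ nu p = q)).
- by rewrite oner_neq0 nu1.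
- move=> x1 x2 y1 y2 [H1 <-] [H2 <-]; split; first by rewrite mulf_neq0.
  by rewrite nuM.
- by move=> i _; split.
Qed.

Lemma nu_Pmono (s : seq nat) : Pmono K s != 0 /\ nu (Pmono K s) = Pmono_val s.
Proof.
rewrite /Pmono /Pmono_val.
have HF : forall i : 'I_(size s), P K i ^+ nth 0%N s i != 0.
  by move=> i; rewrite expf_neq0 // P_neq0.
have [H1 H2] := nu_prod (index_enum 'I_(size s)) HF.
split => //; rewrite H2; apply: eq_bigr => i _.
rewrite nuX ?P_neq0 //; case: Hg => -> _ //.
Qed.

Lemma nu_sum_min (I : eqType) (r : seq I) (F : I -> Pxy) :
  \sum_(i <- r) F i != 0 ->
  exists i, [/\ i \in r, F i != 0 & nu (F i) <= nu (\sum_(i <- r) F i)].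
Proof.
elim: r => [|x r IH]; first by rewrite big_nil eqxx.
rewrite big_cons => Hs.
have [Fx0|Fx0] := eqVneq (F x) 0.
  move: Hs; rewrite Fx0 add0r => /IH [i [H1 H2 H3]].
  by exists i; rewrite inE H1 orbT.
have [S0|S0] := eqVneq (\sum_(i <- r) F i) 0.
  by exists x; rewrite inE eqxx S0 addr0.
have := nuD Fx0 S0 Hs.
have [le1|le1] := leP (nu (F x)) (nu (\sum_(i <- r) F i)).
  by move=> H; exists x; rewrite inE eqxx.
move=> H; have [i [H1 H2 H3]] := IH S0.
exists i; rewrite inE H1 orbT; split => //.
by apply: (le_trans H3); apply: (le_trans _ H).
Qed.

Lemma nu_sum_ge (I : eqType) (r : seq I) (F : I -> Pxy) (c : rat) :
  \sum_(i <- r) F i != 0 ->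
  (forall i, i \in r -> F i != 0 -> c <= nu (F i)) ->
  c <= nu (\sum_(i <- r) F i).
Proof.
move=> /nu_sum_min [i [H1 H2 H3]] H; exact: le_trans (H i H1 H2) H3.
Qed.

Lemma nu_add_strict (a b : Pxy) : a != 0 -> (b = 0 \/ (b != 0 /\ nu a < nu b)) ->
  a + b != 0 /\ nu (a + b) = nu a.
Proof.
move=> a0 [->|[b0 lt]]; first by rewrite addr0.
have ab0 : a + b != 0.
  apply/negP => /eqP H; have : b = - a by apply/eqP; rewrite -addr_eq0 addrC H.
  by move=> Hb; move: lt; rewrite Hb nuN // ltxx.
split => //.
have H1 := nuD a0 b0 ab0.
have H2 : Num.min (nu (a + b)) (nu (- b)) <= nu a.
  have nb0 : - b != 0 by rewrite oppr_eq0.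
  have e : a + b + - b = a by rewrite addrK.
  by have := @nuD (a + b) (- b) ab0 nb0; rewrite e; apply.
rewrite nuN // in H2.
move: H1; rewrite ge_min => H1.
move: H2; rewrite ge_min => /orP [H2|H2]; last by move: lt; rewrite ltNge H2.
apply/eqP; rewrite eq_le H2 /=.
by case/orP: H1 => // H1; apply: le_trans (ltW lt) H1.
Qed.

Lemma nu_poly_val (f : Pxy) : f != 0 -> exists s, nu f = Pmono_val s.
Proof.
move=> f0; case: Hg => _ /(_ f f0) [h [h0 [s [Hs Hle]]]].
have hf0 : h * f != 0.
  by rewrite mulf_neq0 //; apply: contra h0 => /eqP ->; rewrite /at0 !horner0.
have := hf0; rewrite Hs => /nu_sum_min [c [H1 H2 H3]].
exists c.2; rewrite -Hs in H3.
have c10 : c.1 != 0 by apply: contra H2 => /eqP ->; rewrite mul0r.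
have [Pm0 Pmv] := nu_Pmono c.2.
rewrite (nuM c10 Pm0) Pmv (nuM _ f0) ?(nu_unit h0) ?add0r in H3; last first.
  by apply: contra h0 => /eqP ->; rewrite /at0 !horner0.
have := Hle c H1 => H4.
apply/eqP; rewrite eq_le H4 /=.
apply: le_trans H3; rewrite lerDr nu_ge0 //.
Qed.

End Nu.



Definition D (k : nat) (q : rat) := exists z : int, q * 2 ^+ k = z%:~R.

Lemma D0 k : D k 0.
Proof. by exists 0; rewrite mul0r. Qed.

Lemma D_add k p q : D k p -> D k q -> D k (p + q).
Proof. by move=> [a Ha] [b Hb]; exists (a + b); rewrite mulrDl Ha Hb intrD. Qed.

Lemma D_opp k p : D k p -> D k (- p).
Proof. by move=> [a Ha]; exists (- a); rewrite mulNr Ha intrN. Qed.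

Lemma D_S k p : D k p -> D k.+1 p.
Proof. by move=> [a Ha]; exists (a * 2); rewrite exprSr mulrA Ha intrM. Qed.

Lemma D_mono k l p : (k <= l)%N -> D k p -> D l p.
Proof.
move=> /subnK <-; elim: (l - k)%N => [|m IH] // Hp.
by rewrite addSn; apply: D_S; apply: IH.
Qed.

Lemma D_nat k n : D k n%:R.
Proof. by exists (n * 2 ^ k)%N; rewrite -natrX -natrM. Qed.

Lemma D_natmul k n p : D k p -> D k (n%:R * p).
Proof. by move=> [a Ha]; exists (n%:Z * a); rewrite -mulrA Ha intrM. Qed.

Lemma beta_D j : D j (beta j).
Proof.
elim: j => [|j [a Ha]]; first by exists 1; rewrite /= mulr1.
exists (a * 4 + 1).
rewrite /= mulrDl intrD intrM mulVf ?expf_neq0 //.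
congr (_ + _); rewrite -Ha exprS.
have -> : (4%:~R : rat) = 2 * 2 by [].
by rewrite mulrACA mulrC.
Qed.

Lemma half_not_int (z : int) : (2 : rat)^-1 != z%:~R.
Proof.
have h0 : (0 : rat) < 2^-1 by rewrite invr_gt0.
have h1 : (2 : rat)^-1 < 1 by rewrite invf_lt1 // ltr1n.
have [w0|w0] := lerP z 0.
  by rewrite gt_eqF // (le_lt_trans _ h0) // lerz0.
rewrite lt_eqF // (lt_le_trans h1) //.
by rewrite gtz0_ge1 -(ler_int rat) in w0.
Qed.

Lemma beta_notD i : ~ D i (beta i.+1).
Proof.
move=> [z Hz]; have [a Ha] := beta_D i.
move: Hz; rewrite /= mulrDl exprS invfM -mulrA Ha divfK ?expf_neq0 // => H.
apply/negP: (half_not_int (z - 2 * a)); apply/negPn/eqP.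
rewrite intrB -H intrM.
have -> : (2%:~R : rat) = 2 by [].
by rewrite addrAC subrr add0r.
Qed.

Lemma beta_gt0 j : 0 < beta j.
Proof.
elim: j => [|j IH] //=.
by rewrite ltr_wpDr // ?invr_ge0 ?exprn_ge0 // mulr_gt0.
Qed.

Lemma beta_le i j : (i <= j)%N -> beta i <= beta j.
Proof.
move=> /subnK <-; elim: (j - i)%N => [|m IH] //.
apply: (le_trans IH); rewrite addSn /=.
rewrite -[X in X <= _]addr0 lerD ?invr_ge0 ?exprn_ge0 //.
by rewrite ler_peMl ?ltW ?beta_gt0 // ler1n.
Qed.

Lemma Pmono_val_D (s : seq nat) : D (size s) (Pmono_val s).
Proof.
rewrite /Pmono_val; elim/big_ind: _ => [|x y|j _]; first exact: D0.
  exact: D_add.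
apply: D_natmul; apply: (D_mono (ltnW (ltn_ord j))); exact: beta_D.
Qed.

Lemma Pmono_val_ge0 (s : seq nat) : 0 <= Pmono_val s.
Proof.
rewrite /Pmono_val; apply: sumr_ge0 => j _.
by apply: mulr_ge0; [apply: ler0n | apply: ltW; apply: beta_gt0].
Qed.

Lemma Pmono_val_lt (s : seq nat) i : Pmono_val s < beta i.+1 -> D i (Pmono_val s).
Proof.
move=> Hlt; rewrite /Pmono_val; elim/big_ind: _ => [|x y|j _]; first exact: D0.
  exact: D_add.
have [ji|ij] := leqP j i.
  by apply: D_natmul; apply: (D_mono ji); exact: beta_D.
have [->|sj] := eqVneq (nth 0%N s j) 0%N; first by rewrite mul0r; exact: D0.
exfalso; move: Hlt; apply/negP; rewrite -leNgt.
rewrite /Pmono_val (bigD1 j) //.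
rewrite -[beta i.+1]addr0 lerD ?sumr_ge0 // => [|k _]; last first.
  by apply: mulr_ge0; [apply: ler0n | apply: ltW; apply: beta_gt0].
rewrite -[beta i.+1]mul1r; apply: ler_pM => //.
- exact: ltW (beta_gt0 _).
- by rewrite ler1n lt0n.
- exact: beta_le.
Qed.



Lemma common_bound (ms : seq rat) :
  (forall m, m \in ms -> exists k, D k m) -> exists k, forall m, m \in ms -> D k m.
Proof.
elim: ms => [|x ms IH] H; first by exists 0%N.
have [k1 Hk1] := H x (mem_head _ _).
have [k2 Hk2] : exists k, forall m, m \in ms -> D k m.
  by apply: IH => m Hm; apply: H; rewrite inE Hm orbT.
exists (maxn k1 k2) => m; rewrite inE => /orP [/eqP ->|Hm].
  by apply: (D_mono (leq_maxl _ _)).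
by apply: (D_mono (leq_maxr _ _)); apply: Hk2.
Qed.

Lemma not_fg (M F : rat -> Prop) :
  (forall a, M a -> exists s, a = Pmono_val s) ->
  (forall u, F u -> 0 <= u /\ exists k, D k u) ->
  (forall i, F (beta i.+1 - 1)) ->
  ~ fg_module M F.
Proof.
move=> HM HF Hu [ms [Hms Heq]].
have [k Hk] : exists k, forall m, m \in ms -> D k m.
  by apply: common_bound => m /Hms /HF [].
have [m Hm [a Ha Hua]] := (Heq (beta k.+1 - 1)).1 (Hu k).
have [s Hs] := HM a Ha.
have m0 : 0 <= m by have [] := HF m (Hms m Hm).
have Da : D k a.
  rewrite Hs; apply: Pmono_val_lt; rewrite -Hs.
  have -> : a = beta k.+1 - 1 - m by rewrite Hua addrK.
  have h : -1 - m < 0 by rewrite subr_lt0 (lt_le_trans _ m0) // oppr_lt0.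
  by rewrite -addrA -[X in _ < X]addr0 ltrD2l.
apply: (@beta_notD k).
have -> : beta k.+1 = (beta k.+1 - 1) + 1 by rewrite subrK.
apply: D_add; last exact: (D_nat k 1).
by rewrite Hua; apply: D_add => //; apply: Hk.
Qed.



Section Main.
Variable K : closedFieldType.
Local Notation Pxy := {poly {poly K}}.
Variable nu : Pxy -> rat.
Hypothesis Hv : is_valuation nu.
Hypothesis Hd : dominates_A nu.
Hypothesis Hg : generating_seq nu.

Lemma nu_P i : nu (P K i) = beta i.
Proof. by case: Hg => ->. Qed.

Lemma nu_varx : nu (varx K) = 1.
Proof. exact: (nu_P 0). Qed.

Lemma nu_vary : nu (vary K) = beta 1.
Proof. exact: (nu_P 1). Qed.

Lemma vary_neq0 : vary K != 0.
Proof. by rewrite /vary polyX_eq0. Qed.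

Lemma beta1_gt1 : 1 < beta 1.
Proof.
have -> : beta 1 = 2 + 2^-1 by rewrite /= mulr1 expr1.
by rewrite (@lt_le_trans _ _ 2) ?ltr1n // lerDl invr_ge0.
Qed.

Lemma nu_term (c : Pxy) j k : c != 0 ->
  c * vary K ^+ j * varx K ^+ k != 0 /\
  nu (c * vary K ^+ j * varx K ^+ k) = nu c + j%:R * beta 1 + k%:R.
Proof.
move=> c0.
have y0 : vary K ^+ j != 0 by rewrite expf_neq0 // vary_neq0.
have x0 : varx K ^+ k != 0 by rewrite expf_neq0 // varx_neq0.
split; first by rewrite !mulf_neq0.
rewrite (nuM Hv) ?mulf_neq0 // (nuM Hv) // (nuX Hv) ?vary_neq0 //.
by rewrite (nuX Hv) ?varx_neq0 // nu_vary nu_varx mulr1.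
Qed.

Lemma term_c0 (c : Pxy) j k : c * vary K ^+ j * varx K ^+ k != 0 -> c != 0.
Proof. by apply: contra => /eqP ->; rewrite !mul0r. Qed.

Lemma M0_val a : M0 nu a -> exists s, a = Pmono_val s.
Proof.
move=> [f [h [f0 [h0 [h1 ->]]]]].
rewrite (nu_unit Hv Hd h1) subr0; exact: nu_poly_val.
Qed.

Lemma Mn_prop n u : Mn nu n u -> 0 <= u /\ exists k, D k u.
Proof.
move=> [a [W0 ->]]; rewrite nu_varx mulr1; split.
  rewrite subr_ge0; move: W0; rewrite /Wn_num => W0.
  apply: (nu_sum_ge Hv W0) => j _ /term_c0 c0.
  have [_ ->] := nu_term j (n - j) c0.
  rewrite natrB; last by rewrite -ltnS.
  have e : n%:R = 0 + j%:R * 1 + (n%:R - j%:R) :> rat.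
    by rewrite add0r mulr1 addrC subrK.
  rewrite {1}e; apply: lerD => //; apply: lerD; first exact: nu_ge0 Hv Hd _ c0.
  by apply: ler_wpM2l => //; apply: ltW; apply: beta1_gt1.
have [s Hs] := nu_poly_val Hv Hd Hg W0.
exists (size s); rewrite Hs; apply: D_add; first exact: Pmono_val_D.
by apply: D_opp; apply: D_nat.
Qed.
Lemma Mn_mem n i : (1 <= n)%N -> Mn nu n (beta i.+1 - 1).
Proof.
case: n => [|n] // _.
have [A [B HAB]] := P_decomp K i.
pose a := fun j : nat => if j == 0%N then A else if j == 1%N then B else 0.
have HW : Wn_num n.+1 a = varx K ^+ n * P K i.+1.
  rewrite /Wn_num big_ord_recl big_ord_recl big1 ?addr0; last first.
    by move=> j _; rewrite /a /= !mul0r.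
  rewrite /a /= expr0 expr1 mulr1 subSS subn0 HAB mulrDr exprS.
  congr (_ + _); first by rewrite [RHS]mulrCA [RHS]mulrA mulrC.
  by rewrite subn0 mulrC [B * _]mulrC.
exists a; rewrite HW; split.
  by rewrite mulf_neq0 ?expf_neq0 ?varx_neq0 ?P_neq0.
rewrite (nuM Hv) ?expf_neq0 ?varx_neq0 ?P_neq0 // (nuX Hv) ?varx_neq0 //.
rewrite nu_varx nu_P !mulr1 -natr1.
by rewrite opprD addrA [n%:R + _]addrC addrK.
Qed.
End Main.



Section Inf.
Variable K : closedFieldType.
Local Notation Pxy := {poly {poly K}}.
Variable nu : Pxy -> rat.
Hypothesis Hv : is_valuation nu.
Hypothesis Hd : dominates_A nu.
Hypothesis Hg : generating_seq nu.

Lemma xz_num_poly (G : Pxy) :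
  xz_num G = \poly_(j < size G) (G`_j * 'X^(size G - j)).
Proof.
rewrite /xz_num poly_def; apply: eq_bigr => j _.
rewrite /varx /vary -rmorphXn mulrAC -polyCM mul_polyC.
done.
Qed.

Lemma xz_num_neq0 (G : Pxy) : G != 0 -> xz_num G != 0.
Proof.
move=> G0; rewrite xz_num_poly; apply/eqP => H.
have := congr1 (fun p : Pxy => p`_(size G).-1) H.
rewrite coef_poly coef0.
have -> : ((size G).-1 < size G)%N by rewrite prednK ?size_poly_gt0.
move=> /eqP.
rewrite mulf_eq0 expf_eq0 polyX_eq0 andbF orbF -lead_coefE lead_coef_eq0.
by rewrite (negPf G0).
Qed.

Lemma nu_xz_prop (G : Pxy) : G != 0 -> 0 <= nu_xz nu G /\ exists k, D k (nu_xz nu G).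
Proof.
move=> G0; have W0 := xz_num_neq0 G0.
rewrite /nu_xz nu_varx // mulr1; split.
  rewrite subr_ge0; move: W0; rewrite /xz_num => W0.
  apply: (nu_sum_ge Hv W0) => j _ /term_c0 c0.
  have [_ ->] := nu_term Hv Hg j (size G - j) c0.
  rewrite natrB; last by apply: ltnW.
  have e : (size G)%:R = 0 + j%:R * 1 + ((size G)%:R - j%:R) :> rat.
    by rewrite add0r mulr1 addrC subrK.
  rewrite {1}e; apply: lerD => //; apply: lerD; first exact: nu_ge0 Hv Hd _ c0.
  by apply: ler_wpM2l => //; apply: ltW; apply: beta1_gt1.
have [s Hs] := nu_poly_val Hv Hd Hg W0.
exists (size s); rewrite Hs; apply: D_add; first exact: Pmono_val_D.
by apply: D_opp; apply: D_nat.
Qed.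

Lemma at0_C (c : {poly K}) : at0 (c%:P) = c.[0].
Proof. by rewrite /at0 hornerC. Qed.

Lemma nu_xz_unit (H : Pxy) : at0 H != 0 -> nu_xz nu H = 0.
Proof.
move=> H1; have H0 : H != 0 by apply: contra H1 => /eqP ->; rewrite /at0 !horner0.
rewrite /nu_xz nu_varx // mulr1 /xz_num.
have : (0 < size H)%N by rewrite size_poly_gt0.
case E : (size H) => [|N] // _.
rewrite big_ord_recl /=.
have c0 : at0 (H`_0)%:P != 0 by rewrite at0_C -horner_coef0.
have c00 : (H`_0)%:P != 0 by apply: contra c0 => /eqP ->; rewrite /at0 !horner0.
have [T0 T0v] := nu_term Hv Hg 0 N.+1 c00.
rewrite (nu_unit Hv Hd c0) add0r in T0v.
set R := \sum_(i < N) _.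
have [S0 Sv] : (H`_0)%:P * vary K ^+ 0 * varx K ^+ (N.+1 - 0) + R != 0 /\
  nu ((H`_0)%:P * vary K ^+ 0 * varx K ^+ (N.+1 - 0) + R) =
  nu ((H`_0)%:P * vary K ^+ 0 * varx K ^+ (N.+1 - 0)).
  apply: nu_add_strict => //.
  have [->|R0] := eqVneq R 0; [by left | right; split => //].
  rewrite subn0 T0v.
  apply: (@lt_le_trans _ _ (N%:R + beta 1)).
    by rewrite -natr1 ltrD2l beta1_gt1.
  apply: (nu_sum_ge Hv R0) => j _ /term_c0 cj.
  have [_ ->] := nu_term Hv Hg (lift ord0 j) (N.+1 - lift ord0 j) cj.
  set b := beta 1.
  have b1 : 1 < b by apply: beta1_gt1.
  rewrite /= /bump /= add1n subSS natrB; last by apply: ltnW.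
  rewrite -[N%:R + b]add0r -addrA; apply: lerD; first exact: nu_ge0 Hv Hd _ cj.
  rewrite -natr1 mulrDl mul1r [j%:R * b + b]addrC -addrA [N%:R + b]addrC lerD2l.
  rewrite addrCA lerDl subr_ge0 -[X in X <= _]mulr1 ler_wpM2l // ltW //.
by rewrite Sv subn0 T0v subrr.
Qed.

Lemma Minf_prop u : Minf nu u -> 0 <= u /\ exists k, D k u.
Proof.
move=> [G [H [G0 [H0 [H1 ->]]]]]; rewrite (nu_xz_unit H1) subr0.
exact: nu_xz_prop.
Qed.

Lemma at0_P i : at0 (P K i.+1) = 0.
Proof.
have [A [B ->]] := P_decomp K i.
by rewrite /at0 /varx /vary !hornerE.
Qed.

Lemma Minf_mem i : Minf nu (beta i.+1 - 1).
Proof.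
set f := P K i.+1.
have f00 : f`_0`_0 = 0 by have := at0_P i; rewrite /at0 !horner_coef0.
set g0 := drop_poly 1 f`_0.
have Hg0 : f`_0 = 'X * g0.
  apply/polyP => k; rewrite coefXM; case: k => [|k] /=; first by rewrite f00.
  by rewrite coef_drop_poly addn1.
have [fm sf] : f \is monic /\ (1 < size f)%N.
  have [H1 H2 H3] := Ppair_inv K i.
  rewrite /f P_succ; split => //; apply: leq_ltn_trans H3.
  by rewrite size_poly_gt0.
set N := size f.
have N0 : (0 < N)%N by apply: ltnW.
pose G := \poly_(k < N) (if k == 0%N then g0 else f`_k * 'X^(k.-1)).
have sG : size G = N.
  rewrite size_poly_eq //.
  have -> : (N.-1 == 0%N) = false by apply/negbTE; rewrite -lt0n -ltnS prednK.
  by rewrite -lead_coefE (monicP fm) mul1r expf_neq0 // polyX_eq0.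
have HG : xz_num G = varx K ^+ N.-1 * f.
  rewrite xz_num_poly sG; apply/polyP => k.
  rewrite coef_poly /varx -rmorphXn coefCM coef_poly.
  case: (ltnP k N) => kN.
    case: k kN => [|k] kN /=.
      by rewrite Hg0 subn0 mulrA -exprSr prednK // mulrC.
    rewrite -mulrA -exprD mulrC; congr (_ * _); congr ('X^_).
    by rewrite addnBA 1?ltnW // -addn1 subnDl subn1.
  by rewrite nth_default // mulr0.
exists G, 1; split; first by rewrite -size_poly_gt0 sG.
split; first exact: oner_neq0.
have a1 : at0 (1 : Pxy) != 0 by rewrite at0_1 oner_neq0.
split => //.
rewrite (nu_xz_unit a1) subr0 /nu_xz HG sG.
rewrite (nuM Hv) ?expf_neq0 ?varx_neq0 ?P_neq0 // (nuX Hv) ?varx_neq0 //.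
rewrite nu_varx // nu_P // !mulr1.
have eN : (N%:R : rat) = (N.-1)%:R + 1 by rewrite natr1 prednK.
by rewrite eN opprD addrA [N.-1%:R + _]addrC addrK.
Qed.

End Inf.

Theorem mainTheorem15 (K : closedFieldType) (nu : {poly {poly K}} -> rat) :
  is_nubar nu ->
  (forall n : nat, (1 <= n)%N -> ~ fg_module (M0 nu) (Mn nu n)) /\
  ~ fg_module (M0 nu) (Minf nu).
Proof.
move=> [Hv [Hd Hg]]; split.
  move=> n n1; apply: not_fg => [a|u|i].
  - exact: M0_val Hv Hd Hg a.
  - exact: Mn_prop Hv Hd Hg n u.
  - exact: Mn_mem Hv Hg n i n1.
apply: not_fg => [a|u|i].
- exact: M0_val Hv Hd Hg a.
- exact: Minf_prop Hv Hd Hg u.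
- exact: Minf_mem Hv Hd Hg i.
Qed.
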